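(* Let $A,B,X,Y\in\mathcal{B}(\mathcal{H})$. Then \begin{equation*} w(X^*AY+Y^*BX)\leq 2\|X\|\|Y\|\, w\left(\begin{bmatrix} 0 &A \\ B& 0 \end{bmatrix}\right). \end{equation*} In particular, $$w(X^*AY+Y^*AX)\leq 2\|X\|\|Y\|\, w(A).$$
   Context: $\mathcal{H}$ is a complex Hilbert space and $\mathcal{B}(\mathcal{H})$ is the $C^*$-algebra of all bounded linear operators on $\mathcal{H}$. For $T\in\mathcal{B}(\mathcal{H})$, $w(T)=\sup\{|\langle Tx,x\rangle|:\|x\|=1\}$ is the numerical radius and $\|T\|$ the operator norm. A $2\times 2$ operator matrix with entries in $\mathcal{B}(\mathcal{H})$ is regarded as an operator on $\mathcal{H}\oplus\mathcal{H}$. *)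

(* Defs.v *)
From HB Require Import structures.
From mathcomp Require Import all_boot all_order all_algebra.
From mathcomp Require Import complex.
From mathcomp Require Import all_classical all_reals.
Set Implicit Arguments. Unset Strict Implicit. Unset Printing Implicit Defensive.
Import Order.TTheory GRing.Theory Num.Theory.
Local Open Scope ring_scope.
Local Open Scope classical_set_scope.

(* A complex Hilbert space is modelled as a module V over C = R[i]
   (R an arbitrary realType, i.e. the real numbers) together with an
   inner product ip, linear in the first argument, conjugate symmetric,
   positive definite, whose induced norm is complete. *)

Section Hilbert.
Variable R : realType.
Local Notation C := R[i].
Variable V : lmodType C.
Variable ip : V -> V -> C.

Definition is_inner_product : Prop :=
  [/\ forall (a : C) (x y z : V), ip (a *: x + y) z = a * ip x z + ip y z,
      forall x y : V, ip y x = Num.conj (ip x y),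
      forall x : V, 0 <= ip x x
    & forall x : V, ip x x = 0 -> x = 0].

Definition hnorm (x : V) : R := Num.sqrt (complex.Re (ip x x)).

Definition hcauchy (u : nat -> V) : Prop :=
  forall e : R, 0 < e -> exists N : nat, forall m n : nat,
    (N <= m)%N -> (N <= n)%N -> hnorm (u m - u n) < e.

Definition hconverges (u : nat -> V) : Prop :=
  exists l : V, forall e : R, 0 < e -> exists N : nat, forall n : nat,
    (N <= n)%N -> hnorm (u n - l) < e.

Definition is_hilbert_space : Prop :=
  is_inner_product /\ forall u : nat -> V, hcauchy u -> hconverges u.

Definition bounded_op (T : V -> V) : Prop :=
  (forall (a : C) (x y : V), T (a *: x + y) = a *: T x + T y) /\
  exists M : R, forall x : V, hnorm (T x) <= M * hnorm x.

Definition is_adjoint (T Ts : V -> V) : Prop :=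
  forall x y : V, ip (T x) y = ip x (Ts y).

Definition opnorm (T : V -> V) : R :=
  sup [set hnorm (T x) | x in [set x : V | hnorm x = 1]].

Definition numrad (T : V -> V) : R :=
  sup [set Normc.normc (ip (T x) x) | x in [set x : V | hnorm x = 1]].

(* numerical radius of the operator matrix [[0, A], [B, 0]] acting on
   H ⊕ H (with inner product <(x1,y1),(x2,y2)> = <x1,x2> + <y1,y2>):
   [[0,A],[B,0]] (x,y) = (A y, B x), so
   w = sup { |<A y, x> + <B x, y>| : ||x||^2 + ||y||^2 = 1 }. *)
Definition numrad_offdiag (A B : V -> V) : R :=
  sup [set Normc.normc (ip (A xy.2) xy.1 + ip (B xy.1) xy.2)
      | xy in [set xy : V * V | hnorm xy.1 ^+ 2 + hnorm xy.2 ^+ 2 = 1]].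

End Hilbert.

(* Main.v *)
Require Import Defs.
From HB Require Import structures.
From mathcomp Require Import all_boot all_order all_algebra.
From mathcomp Require Import complex.
From mathcomp Require Import all_classical all_reals.
From mathcomp Require Import ring lra.
Import Order.TTheory GRing.Theory Num.Theory.
Local Open Scope ring_scope.

Section Aux.
Local Open Scope complex_scope.
Local Open Scope classical_set_scope.
Variable R : realType.
Local Notation C := R[i].
Variable V : lmodType C.
Variable ip : V -> V -> C.
Hypothesis HIP : is_inner_product ip.

Lemma ip0l z : ip 0 z = 0.
Proof.
case: HIP => H _ _ _.
have := H 1 0 0 z; rewrite scale1r addr0 mul1r.
by move/(congr1 (fun t => t - ip 0 z)); rewrite subrr addrK.
Qed.

Lemma ipDl x y z : ip (x + y) z = ip x z + ip y z.
Proof. by case: HIP => H _ _ _; have := H 1 x y z; rewrite scale1r mul1r. Qed.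

Lemma ipZl a x z : ip (a *: x) z = a * ip x z.
Proof. by case: HIP => H _ _ _; have := H a x 0 z; rewrite addr0 ip0l addr0. Qed.

Lemma ipNl x z : ip (- x) z = - ip x z.
Proof. by rewrite -scaleN1r ipZl mulN1r. Qed.

Lemma ipC x y : ip y x = Num.conj (ip x y).
Proof. by case: HIP. Qed.

Lemma ip0r z : ip z 0 = 0.
Proof. by rewrite ipC ip0l rmorph0. Qed.

Lemma ipDr x y z : ip z (x + y) = ip z x + ip z y.
Proof. by rewrite ipC ipDl rmorphD [ip z x]ipC [ip z y]ipC. Qed.

Lemma ipZr a x z : ip z (a *: x) = Num.conj a * ip z x.
Proof. by rewrite ipC ipZl rmorphM [ip z x]ipC. Qed.

Lemma ipNr x z : ip z (- x) = - ip z x.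
Proof. by rewrite ipC ipNl rmorphN [ip z x]ipC. Qed.

Lemma ge0C (z : C) : 0 <= z -> z = (complex.Re z)%:C.
Proof. by case: z => a b /ger0_Im /= ->. Qed.

Definition n2 x := complex.Re (ip x x).

Lemma ip_real x : ip x x = (n2 x)%:C.
Proof. by case: HIP => _ _ H _; exact: ge0C. Qed.

Lemma n2_ge0 x : 0 <= n2 x.
Proof. by rewrite -lecR -ip_real; case: HIP. Qed.

Lemma hnorm2 x : hnorm ip x ^+ 2 = n2 x.
Proof. by rewrite /hnorm sqr_sqrtr // n2_ge0. Qed.

Lemma hnorm_ge0 x : 0 <= hnorm ip x.
Proof. exact: sqrtr_ge0. Qed.

Lemma hnorm0 x : hnorm ip x = 0 -> x = 0.
Proof.
move=> /eqP; rewrite sqrtr_eq0 => h.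
have e : n2 x = 0 by apply/eqP; rewrite eq_le h n2_ge0.
by case: HIP => _ _ _; apply; rewrite ip_real e.
Qed.

Lemma conjR (r : R) : Num.conj (r%:C) = r%:C.
Proof. by apply: conj_Creal; rewrite complex_real. Qed.

Lemma n2Z (r : R) x : n2 (r%:C *: x) = r ^+ 2 * n2 x.
Proof.
rewrite /n2 ipZl ipZr conjR ip_real -!rmorphM /=.
by rewrite mulrA expr2.
Qed.

Definition nrm (z : C) : R := Normc.normc z.

Lemma nrm_ge0 z : 0 <= nrm z.
Proof. by case: z => a b; exact: sqrtr_ge0. Qed.

Lemma nrmE z : (nrm z)%:C = `|z|.
Proof. by case: z => a b; rewrite normc_def. Qed.

Lemma nrmR (r : R) : nrm r%:C = `|r|.
Proof. by rewrite /nrm /= expr0n /= addr0 sqrtr_sqr. Qed.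


Lemma ip_bound z x : nrm (ip z x) *+ 2 <= n2 z + n2 x.
Proof.
have [w0|wn0] := eqVneq (ip z x) 0.
  by rewrite w0 /nrm Normc.normc0 mul0rn addr_ge0 ?n2_ge0.
pose w := ip z x.
pose n : C := `|w|.
have n0 : n != 0 by rewrite normr_eq0.
have cn : Num.conj n = n by exact: conj_normC.
have cw : Num.conj w = n ^+ 2 / w by rewrite normCKC mulfK.
pose c : C := w / n.
have cc0 : Num.conj c = Num.conj w / Num.conj n by rewrite /c rmorphM fmorphV.
have cc : Num.conj c = n / w by rewrite cc0 cn cw mulrAC expr2 mulfK.
have H : 0 <= ip (z - c *: x) (z - c *: x) by case: HIP.
have key : ip (z - c *: x) (z - c *: x) = ip z z - n *+ 2 + ip x x.
  rewrite !(ipDl, ipDr, ipNl, ipNr, ipZl, ipZr) -/w [ip x z]ipC -/w cc cw /c.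
  field; rewrite ?n0 ?wn0 //.
rewrite key !ip_real /n -nrmE -rmorphMn -rmorphB -rmorphD ler0c in H.
lra.
Qed.


Lemma nrm0 : nrm 0 = 0.
Proof. exact: Normc.normc0. Qed.

Lemma nrmM a b : nrm (a * b) = nrm a * nrm b.
Proof. exact: Normc.normcM. Qed.

Lemma nrmD a b : nrm (a + b) <= nrm a + nrm b.
Proof. exact: (@le_normcD R a b). Qed.

Definition lin (T : V -> V) := forall (a : C) (x y : V), T (a *: x + y) = a *: T x + T y.

Lemma T0 {T} : lin T -> T 0 = 0.
Proof.
move=> H; have := H 1 0 0; rewrite scale1r addr0 scale1r.
by move/(congr1 (fun t => t - T 0)); rewrite subrr addrK.
Qed.

Lemma TZ {T} a x : lin T -> T (a *: x) = a *: T x.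
Proof. by move=> H; have := H a x 0; rewrite addr0 (T0 H) addr0. Qed.

Lemma TD {T} x y : lin T -> T (x + y) = T x + T y.
Proof. by move=> H; have := H 1 x y; rewrite !scale1r. Qed.

Lemma TN {T} x : lin T -> T (- x) = - T x.
Proof. by move=> H; rewrite -scaleN1r (TZ _ _ H) scaleN1r. Qed.

Definition offset (A B : V -> V) :=
  [set Normc.normc (ip (A xy.2) xy.1 + ip (B xy.1) xy.2)
      | xy in [set xy : V * V | hnorm ip xy.1 ^+ 2 + hnorm ip xy.2 ^+ 2 = 1]].

Lemma K1 A B : lin A -> lin B -> has_ubound (offset A B) -> forall u v,
  nrm (ip (A v) u + ip (B u) v) <= 2 * hnorm ip u * hnorm ip v * numrad_offdiag ip A B.
Proof.
move=> lA lB hub u v.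
have [u0|un0] := eqVneq (hnorm ip u) 0.
  by rewrite u0 ?mulr0 ?mul0r (hnorm0 _ u0) (T0 lB) ip0l ip0r addr0 nrm0.
have [v0|vn0] := eqVneq (hnorm ip v) 0.
  by rewrite v0 ?mulr0 ?mul0r (hnorm0 _ v0) (T0 lA) ip0l ip0r addr0 nrm0.
pose a := hnorm ip u; pose b := hnorm ip v.
have a0 : 0 < a by rewrite lt_neqAle eq_sym un0 hnorm_ge0.
have b0 : 0 < b by rewrite lt_neqAle eq_sym vn0 hnorm_ge0.
pose s := Num.sqrt (2 : R).
have s0 : 0 < s by rewrite sqrtr_gt0.
have s2 : s ^+ 2 = 2 by rewrite sqr_sqrtr.
pose al := (s * a)^-1; pose be := (s * b)^-1.
pose p := al%:C *: u; pose q := be%:C *: v.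
have mem : offset A B (nrm (ip (A q) p + ip (B p) q)).
  exists (p, q) => //=.
  rewrite !hnorm2 !n2Z -!hnorm2 -/a -/b /al /be !exprVn !exprMn s2.
  field; rewrite ?(gt_eqF a0) ?(gt_eqF b0) //.
have le := ub_le_sup hub mem.
have val : ip (A q) p + ip (B p) q = (al * be)%:C * (ip (A v) u + ip (B u) v).
  rewrite /p /q !TZ // !ipZl !ipZr !conjR rmorphM /=; ring.
rewrite val nrmM nrmR ger0_norm in le; last first.
  by rewrite mulr_ge0 // invr_ge0 mulr_ge0 // ltW.
set E := nrm _ in le *.
have -> : E = (s * a * (s * b)) * (al * be * E).
  rewrite /al /be; field; rewrite ?(gt_eqF a0) ?(gt_eqF b0) ?(gt_eqF s0) //.
have -> : 2 * a * b * numrad_offdiag ip A B = (s * a * (s * b)) * numrad_offdiag ip A B.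
  by rewrite mulrACA -expr2 s2 mulrA.
apply: ler_wpM2l => //.
by rewrite mulr_ge0 // mulr_ge0 // ltW.
Qed.


Lemma sup_ge0 (E : set R) : (forall x, E x -> 0 <= x) -> 0 <= sup E.
Proof.
move=> h; case: (pselect (has_sup E)) => [hs|nhs]; last by rewrite sup_out.
case: hs => [[x Ex] ub]; apply: le_trans (h x Ex) _; exact: ub_le_sup.
Qed.

Lemma sup_le_c (E : set R) c : (forall x, E x -> x <= c) -> 0 <= c -> sup E <= c.
Proof.
move=> h c0; case: (pselect (E !=set0)) => [ne|e]; first exact: ge_sup.
rewrite (_ : E = set0) ?sup0 //; apply/seteqP; split => x // Ex.
by exfalso; apply: e; exists x.
Qed.

Lemma n2_le1 {x y} : hnorm ip x ^+ 2 + hnorm ip y ^+ 2 = 1 -> n2 x <= 1.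
Proof. by rewrite !hnorm2 => e; have := n2_ge0 y; lra. Qed.

Lemma n2_op {T M} : (forall x, hnorm ip (T x) <= M * hnorm ip x) ->
  forall x, n2 (T x) <= M ^+ 2 * n2 x.
Proof.
move=> h x; rewrite -!hnorm2 -exprMn !expr2.
have := h x => hx.
by apply: ler_pM => //; exact: hnorm_ge0.
Qed.

Lemma offset_ub {A B} : bounded_op ip A -> bounded_op ip B -> has_ubound (offset A B).
Proof.
move=> [lA [MA hA]] [lB [MB hB]].
exists (MA ^+ 2 + MB ^+ 2 + 2) => _ [[x y] /= hxy <-].
have h1 := n2_le1 hxy.
have h2 : n2 y <= 1 by apply: (@n2_le1 y x); rewrite addrC.
have e1 := ip_bound (A y) x.
have e2 := ip_bound (B x) y.
have f1 := n2_op hA y.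
have f2 := n2_op hB x.
have g1 : MA ^+ 2 * n2 y <= MA ^+ 2 by rewrite -[leRHS]mulr1 ler_wpM2l // sqr_ge0.
have g2 : MB ^+ 2 * n2 x <= MB ^+ 2 by rewrite -[leRHS]mulr1 ler_wpM2l // sqr_ge0.
have k := nrmD (ip (A y) x) (ip (B x) y).
have p1 := nrm_ge0 (ip (A y) x).
have p2 := nrm_ge0 (ip (B x) y).
rewrite /nrm in k p1 p2 e1 e2 *.
rewrite mulr2n in e1 e2.
lra.
Qed.

Definition opset T := [set hnorm ip (T x) | x in [set x : V | hnorm ip x = 1]].

Lemma opset_ub {T} : bounded_op ip T -> has_ubound (opset T).
Proof.
move=> [_ [M hM]]; exists M => _ [x /= x1 <-].
by have := hM x; rewrite x1 mulr1.
Qed.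

Lemma le_opnorm T x : bounded_op ip T -> hnorm ip x = 1 -> hnorm ip (T x) <= opnorm ip T.
Proof. by move=> hT x1; have H := ub_le_sup (opset_ub hT); apply: H; exists x. Qed.

Lemma opnorm_ge0 T : 0 <= opnorm ip T.
Proof. by apply: sup_ge0 => _ [x _ <-]; exact: hnorm_ge0. Qed.

Lemma offdiag_ge0 A B : 0 <= numrad_offdiag ip A B.
Proof. by apply: sup_ge0 => _ [x _ <-]; exact: nrm_ge0. Qed.

Lemma numrad_ge0 A : 0 <= numrad ip A.
Proof. by apply: sup_ge0 => _ [x _ <-]; exact: nrm_ge0. Qed.

Definition nrset A := [set Normc.normc (ip (A x) x) | x in [set x : V | hnorm ip x = 1]].

Lemma nrset_ub {A} : bounded_op ip A -> has_ubound (nrset A).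
Proof.
move=> [lA [M hM]]; exists (M ^+ 2 + 1) => _ [x /= x1 <-].
have e := ip_bound (A x) x.
have f := n2_op hM x.
have h : n2 x = 1 by rewrite -hnorm2 x1 expr1n.
rewrite h mulr1 in f.
have p := nrm_ge0 (ip (A x) x).
rewrite /nrm mulr2n in e p *.
lra.
Qed.


Lemma K2 A : lin A -> has_ubound (nrset A) -> forall z,
  nrm (ip (A z) z) <= numrad ip A * n2 z.
Proof.
move=> lA hub z.
have [z0|zn0] := eqVneq (hnorm ip z) 0.
  by rewrite -hnorm2 z0 expr0n /= mulr0 (hnorm0 _ z0) (T0 lA) ip0l nrm0.
pose h := hnorm ip z.
have h0 : 0 < h by rewrite lt_neqAle eq_sym zn0 hnorm_ge0.
pose al := h^-1.
pose z' := al%:C *: z.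
have mem : nrset A (nrm (ip (A z') z')).
  exists z' => //=.
  rewrite /hnorm -/(n2 z') n2Z -hnorm2 -/h /al exprVn mulVf ?sqrtr1 //.
  by rewrite expf_neq0 // gt_eqF.
have le := ub_le_sup hub mem.
have val : ip (A z') z' = (al * al)%:C * ip (A z) z.
  rewrite /z' !TZ // !ipZl !ipZr !conjR rmorphM /=; ring.
rewrite val nrmM nrmR ger0_norm in le; last first.
  by rewrite mulr_ge0 // invr_ge0 ltW.
set E := nrm _ in le *.
have -> : E = (h * h) * (al * al * E).
  by rewrite /al; field; rewrite gt_eqF.
rewrite -hnorm2 -/h expr2 mulrC.
apply: ler_wpM2r => //.
by rewrite mulr_ge0 // ltW.
Qed.

Lemma paral x y : n2 (x + y) + n2 (x - y) = (n2 x + n2 y) *+ 2.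
Proof.
apply: (@complexI R); rewrite rmorphMn !rmorphD /= -!ip_real.
rewrite !(ipDl, ipDr, ipNl, ipNr); ring.
Qed.

Lemma offdiag_le A : bounded_op ip A -> numrad_offdiag ip A A <= numrad ip A.
Proof.
move=> hA; have [lA _] := hA.
apply: sup_le_c; last exact: numrad_ge0.
move=> _ [[x y] /= hxy <-].
rewrite !hnorm2 in hxy.
set E := ip (A y) x + ip (A x) y.
have pol : E *+ 2 = ip (A (x + y)) (x + y) + - ip (A (x - y)) (x - y).
  rewrite /E (TD _ _ lA) (TD _ _ lA) (TN _ lA).
  rewrite !(ipDl, ipDr, ipNl, ipNr); ring.
have k := nrmD (ip (A (x + y)) (x + y)) (- ip (A (x - y)) (x - y)).
rewrite -pol /nrm normcN normcMn -/(nrm _) -/(nrm _) -/(nrm _) in k.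
have k1 := K2 _ lA (nrset_ub hA) (x + y).
have k2 := K2 _ lA (nrset_ub hA) (x - y).
have pa := paral x y.
rewrite hxy in pa.
have W := numrad_ge0 A.
have : nrm E *+ 2 <= numrad ip A * (n2 (x + y) + n2 (x - y)) by rewrite mulrDr; lra.
rewrite pa !mulr2n -/(nrm E) => h; lra.
Qed.

Lemma adjC T Ts w x : is_adjoint ip T Ts -> ip (Ts w) x = ip w (T x).
Proof. by move=> H; rewrite ipC -H -ipC. Qed.


Lemma P1 A B X Y Xs Ys : bounded_op ip A -> bounded_op ip B ->
  bounded_op ip X -> bounded_op ip Y -> is_adjoint ip X Xs -> is_adjoint ip Y Ys ->
  numrad ip (fun x => Xs (A (Y x)) + Ys (B (X x)))
    <= 2 * opnorm ip X * opnorm ip Y * numrad_offdiag ip A B.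
Proof.
move=> hA hB hX hY hXs hYs.
have [lA _] := hA; have [lB _] := hB.
have W0 := offdiag_ge0 A B.
have oX := opnorm_ge0 X; have oY := opnorm_ge0 Y.
apply: sup_le_c; last by rewrite !mulr_ge0.
move=> _ [x /= x1 <-].
rewrite ipDl (adjC _ _ _ _ hXs) (adjC _ _ _ _ hYs).
have k := K1 _ _ lA lB (offset_ub hA hB) (X x) (Y x).
apply: le_trans k _.
apply: ler_wpM2r => //.
apply: ler_pM; [by rewrite mulr_ge0 ?hnorm_ge0 | exact: hnorm_ge0 | | exact: le_opnorm].
by apply: ler_wpM2l => //; exact: le_opnorm.
Qed.

End Aux.

Theorem theorem4p15 (R : realType) (V : lmodType R[i]) (ip : V -> V -> R[i])
  (HV : is_hilbert_space ip)
  (A B X Y Xs Ys : V -> V)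
  (hA : bounded_op ip A) (hB : bounded_op ip B)
  (hX : bounded_op ip X) (hY : bounded_op ip Y)
  (hXs : is_adjoint ip X Xs) (hYs : is_adjoint ip Y Ys) :
  numrad ip (fun x => Xs (A (Y x)) + Ys (B (X x)))
    <= 2 * opnorm ip X * opnorm ip Y * numrad_offdiag ip A B
  /\
  numrad ip (fun x => Xs (A (Y x)) + Ys (A (X x)))
    <= 2 * opnorm ip X * opnorm ip Y * numrad ip A.
Proof.
case: (HV) => HIP _.
split; first exact: (@P1 _ _ _ HIP _ _ _ _ _ _ hA hB hX hY hXs hYs).
apply: le_trans (@P1 _ _ _ HIP _ _ _ _ _ _ hA hA hX hY hXs hYs) _.
apply: ler_wpM2l; first by rewrite !mulr_ge0 // opnorm_ge0.
exact: (@offdiag_le _ _ _ HIP _ hA).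
Qed.
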